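(* Let $G \ne K_4$ be a connected, claw-free, cubic graph, and let $u(G)$ denote the number of units of $G$. Then \[ u(G)+1 \le \sigma_{(2,1)}(G) \le u(G)+2 . \]
   Context: A graph is claw-free if it has no induced subgraph isomorphic to $K_{1,3}$; it is cubic if every vertex has degree $3$. A diamond is an induced subgraph isomorphic to $K_4$ minus one edge. For a connected, claw-free, cubic graph $G\neq K_4$, the vertex set $V(G)$ can be uniquely partitioned into sets each of which induces a triangle or a diamond in $G$; the parts of this partition are called units (triangle-units and diamond-units), and $u(G)$ is the number of units. $(p,q)$-spreading: let $p\in\mathbb{N}$ and $q\in\mathbb{N}\cup\{\infty\}$. Start with a set $S\subseteq V(G)$ of blue vertices, all other vertices white. The color change rule: if a white vertex $w$ has at least $p$ blue neighbors, and at least one of the blue neighbors of $w$ has at most $q$ white neighbors, then $w$ is recolored blue. $S$ is a $(p,q)$-spreading set if repeatedly applying this rule eventually colors all vertices blue. $\sigma_{(p,q)}(G)$ is the minimum cardinality of a $(p,q)$-spreading set of $G$. *)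

(* Defs.v *)
From mathcomp Require Import all_boot.
Set Implicit Arguments. Unset Strict Implicit. Unset Printing Implicit Defensive.

(* A finite simple graph: vertex type T : finType, adjacency e : rel T,
   assumed symmetric and irreflexive (hypotheses of the theorem). *)
Section Graphs.
Variables (T : finType) (e : rel T).

Definition nbhd (v : T) : {set T} := [set w | e v w].

Definition simple_graph : Prop := symmetric e /\ irreflexive e.

Definition cubic : Prop := forall v, #|nbhd v| = 3.

Definition connected_graph : Prop :=
  0 < #|T| /\ forall x y, connect e x y.

Definition claw_free : Prop :=
  ~ exists v a b c,
      [/\ e v a, e v b, e v c & [/\ a != b, a != c & b != c]] /\
      [/\ ~~ e a b, ~~ e a c & ~~ e b c].

Definition is_K4 : Prop := #|T| = 4 /\ forall x y, x != y -> e x y.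

Definition induces_triangle (X : {set T}) : bool :=
  (#|X| == 3) && [forall x in X, forall y in X, (x != y) ==> e x y].

Definition induces_diamond (X : {set T}) : bool :=
  (#|X| == 4) &&
  [exists a in X, exists b in X,
     [&& a != b, ~~ e a b &
      [forall x in X, forall y in X,
         (x != y) ==> (e x y || ([set x; y] == [set a; b]))]]].

Definition unit_partition (P : {set {set T}}) : bool :=
  partition P [set: T] &&
  [forall B in P, induces_triangle B || induces_diamond B].

(* One round of the colour change rule applied to every
   eligible white vertex simultaneously; since the rule is monotone in the
   blue set, this yields the same final colouring as one-at-a-time
   application. *)
Definition spread_step (p q : nat) (B : {set T}) : {set T} :=
  B :|: [set w | (w \notin B) && (p <= #|nbhd w :&: B|)
                 && [exists v in nbhd w :&: B, #|nbhd v :\: B| <= q]].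

Definition spread_closure (p q : nat) (S : {set T}) : {set T} :=
  iter #|T| (spread_step p q) S.

Definition spreading_set (p q : nat) (S : {set T}) : bool :=
  spread_closure p q S == [set: T].

Lemma spreading_setT p q : spreading_set p q [set: T].
Proof.
rewrite /spreading_set /spread_closure; elim: #|T| => //= n /eqP ->.
by apply/eqP/setP => x; rewrite !inE.
Qed.

Definition sigma_pq (p q : nat) : nat :=
  #|[arg min_(S < [set: T] | spreading_set p q S) #|S|]|.

End Graphs.

(* Main.v *)
Require Import Defs.
From mathcomp Require Import all_boot zify.
Set Implicit Arguments. Unset Strict Implicit. Unset Printing Implicit Defensive.

Definition closedF (T : finType) (e : rel T) (F : {set T}) :=
  spread_step e 2 1 F \subset F.

Lemma step_sub (T : finType) (e : rel T) p q (B : {set T}) :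
  B \subset spread_step e p q B.
Proof. exact: subsetUl. Qed.

Lemma iter_sub (T : finType) (e : rel T) p q (S : {set T}) n :
  S \subset iter n (spread_step e p q) S.
Proof.
elim: n => [|n IH] /=; first exact: subxx.
exact: subset_trans IH (step_sub _ _ _ _).
Qed.

Lemma iter_fix_or (T : finType) (e : rel T) p q (S : {set T}) n :
  spread_step e p q (iter n (spread_step e p q) S) = iter n (spread_step e p q) S
  \/ n <= #|iter n (spread_step e p q) S|.
Proof.
elim: n => [|n [IH|IH]]; first by right.
  by left; rewrite /= IH IH.
have [E|NE] := eqVneq (spread_step e p q (iter n (spread_step e p q) S))
                       (iter n (spread_step e p q) S).
  by left; rewrite /= E E.
right => /=.
have Hp : iter n (spread_step e p q) S \proper spread_step e p q (iter n (spread_step e p q) S).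
  by rewrite properEneq eq_sym NE step_sub.
by apply: leq_trans (proper_card Hp).
Qed.

Lemma closure_closed (T : finType) (e : rel T) (S : {set T}) :
  closedF e (spread_closure e 2 1 S).
Proof.
rewrite /closedF /spread_closure.
case: (iter_fix_or e 2 1 S #|T|) => [-> //|H].
have E : iter #|T| (spread_step e 2 1) S = setT.
  by apply/eqP; rewrite eqEcard subsetT cardsT H.
rewrite E; exact: subsetT.
Qed.

Lemma closure_sub (T : finType) (e : rel T) (S : {set T}) :
  S \subset spread_closure e 2 1 S.
Proof. exact: iter_sub. Qed.

Lemma fill (T : finType) (e : rel T) (F : {set T}) p q w r1 r2 :
  symmetric e -> cubic e -> closedF e F ->
  p \in F -> q \in F -> p != q -> e w p -> e w q ->
  r1 != r2 -> r1 \in F -> r2 \in F -> e p r1 -> e p r2 -> w \in F.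
Proof.
move=> sym cub cl pF qF pq wp wq r12 r1F r2F pr1 pr2.
apply/(subsetP cl); rewrite /spread_step in_setU.
case: (boolP (w \in F)) => //= wF.
rewrite inE wF /=; apply/andP; split.
  have <- : #|[set p; q]| = 2 by rewrite cards2 pq.
  rewrite subset_leq_card //.
  by apply/subsetP => x; rewrite !inE => /orP[]/eqP->; rewrite ?wp ?wq ?pF ?qF.
apply/existsP; exists p; rewrite !inE wp pF /=.
have H2 : 2 <= #|nbhd e p :&: F|.
  have <- : #|[set r1; r2]| = 2 by rewrite cards2 r12.
  rewrite subset_leq_card //.
  by apply/subsetP => x; rewrite !inE => /orP[]/eqP->; rewrite ?pr1 ?pr2 ?r1F ?r2F.
have := cardsID F (nbhd e p); rewrite cub.
move: H2; set a := #|_ :&: _|; set b := #|_ :\: _|.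
move=> H2 H3; lia.
Qed.

Lemma diamond_struct (T : finType) (e : rel T) (X : {set T}) :
  induces_diamond e X -> exists a c d,
  [/\ #|X| = 4, [/\ a \in X, c \in X & d \in X],
      [/\ a != c, a != d & c != d],
      (forall y, y \in X -> y != c -> e c y) &
      (forall y, y \in X -> y != d -> e d y)].
Proof.
case/andP=> /eqP X4 /existsP[a /andP[aX /existsP[b /andP[bX /and3P[ab nab H]]]]].
have : #|X :\: [set a; b]| == 2.
  have := cardsID [set a; b] X.
  have -> : X :&: [set a; b] = [set a; b].
    by apply/setIidPr/subsetP => z; rewrite !inE => /orP[]/eqP->.
  rewrite cards2 ab X4 => H'; apply/eqP; lia.
case/cards2P=> c [d [cd E]].
have cX : c \in X :\: [set a; b] by rewrite E !inE eqxx.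
have dX : d \in X :\: [set a; b] by rewrite E !inE eqxx orbT.
move: cX dX; rewrite !inE => /andP[/norP[ca cb] cX] /andP[/norP[da db] dX].
have univ z : z \in X -> z != a -> z != b -> forall y, y \in X -> y != z -> e z y.
  move=> zX za zb y yX yz.
  move/forallP: H => /(_ z); rewrite zX /= => /forallP /(_ y); rewrite yX /=.
  rewrite eq_sym yz /= => /orP[//|/eqP E2].
  have : z \in [set a; b] by rewrite -E2 !inE eqxx.
  by rewrite !inE (negbTE za) (negbTE zb).
exists a, c, d; split => //; first by rewrite eq_sym ca eq_sym da cd.
  by apply: univ.
by apply: univ.
Qed.

Lemma triangle_struct (T : finType) (e : rel T) (X : {set T}) v :
  induces_triangle e X -> v \in X -> exists s t,
  [/\ X = [set v; s; t], [/\ s != t, s != v & t != v],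
      [/\ s \in X & t \in X] & forall x y, x \in X -> y \in X -> x != y -> e x y].
Proof.
case/andP=> /eqP X3 /forallP H vX.
have Hall x y : x \in X -> y \in X -> x != y -> e x y.
  by move=> xX yX xy; move/(_ x): H; rewrite xX => /forallP /(_ y); rewrite yX /= xy.
have : #|X :\ v| == 2 by move: X3; rewrite (cardsD1 v) vX /= => ?; apply/eqP; lia.
case/cards2P=> s [t [st E]].
have sX : s \in X :\ v by rewrite E !inE eqxx.
have tX : t \in X :\ v by rewrite E !inE eqxx orbT.
move: sX tX; rewrite !inE => /andP[sv sX] /andP[tv tX].
exists s, t; split => //.
apply/setP => z; rewrite !inE; case: (eqVneq z v) => [->|zv] //=.
have := congr1 (fun A : {set T} => z \in A) E; rewrite /= !inE zv /= => <- //.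
Qed.

Definition unitB (T : finType) (e : rel T) (X : {set T}) :=
  induces_triangle e X || induces_diamond e X.

Lemma unit_nbrs (T : finType) (e : rel T) (X : {set T}) v :
  symmetric e -> unitB e X -> v \in X -> exists r1 r2,
  [/\ r1 != r2, [/\ r1 \in X & r2 \in X], [/\ r1 != v & r2 != v] & e v r1 && e v r2].
Proof.
move=> sym /orP[tri|dia] vX.
  have [s [t [_ [st sv tv] [sX tX] Hall]]] := triangle_struct tri vX.
  exists s, t; split => //; rewrite !Hall // eq_sym //.
have [a [c [d [_ [aX cX dX] [ac ad cd] Uc Ud]]]] := diamond_struct dia.
case: (eqVneq v c) => [->|vc].
  exists d, a; split; first by rewrite eq_sym.
  - by [].
  - by split; rewrite // eq_sym.
  - by rewrite !Uc // eq_sym.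
case: (eqVneq v d) => [->|vd].
  exists c, a; split; first by rewrite eq_sym.
  - by [].
  - by split; rewrite // eq_sym.
  - by rewrite !Ud // eq_sym.
exists c, d; split => //.
- by split; rewrite eq_sym.
- by rewrite sym Uc // sym Ud.
Qed.

Lemma no_ext (T : finType) (e : rel T) (X : {set T}) c x :
  cubic e -> #|X| = 4 -> c \in X -> (forall y, y \in X -> y != c -> e c y) ->
  x \notin X -> e c x -> False.
Proof.
move=> cub X4 cX Uc xX cx.
have : #|x |: (X :\ c)| <= #|nbhd e c|.
  apply: subset_leq_card; apply/subsetP => z; rewrite !inE.
  case/orP => [/eqP->//|/andP[zc zX]]; exact: Uc.
rewrite cub cardsU1 !inE (negbTE xX) andbF /=.
move: X4; rewrite (cardsD1 c) cX /=; lia.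
Qed.

Lemma fill_unit (T : finType) (e : rel T) (X : {set T}) x x' :
  symmetric e -> cubic e -> unitB e X -> x' \in X -> x \notin X -> e x x' ->
  exists s, s \in X /\ forall F, closedF e F -> s \in F -> x \in F ->
    (exists r1 r2, [/\ r1 != r2, r1 \in F, r2 \in F & e x r1 && e x r2]) ->
    X \subset F.
Proof.
move=> sym cub /orP[tri|dia] x'X xX xx'.
  have [s [t [E [st sv tv] [sX tX] Hall]]] := triangle_struct tri x'X.
  exists s; split => // F cl sF xF [r1 [r2 [r12 r1F r2F /andP[xr1 xr2]]]].
  have xs : x != s by apply: contraNneq xX => ->.
  have x'F : x' \in F.
    apply: (fill sym cub cl xF sF xs _ _ r12 r1F r2F xr1 xr2).
      by rewrite sym.
    by rewrite Hall // eq_sym.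
  have tF : t \in F.
    apply: (fill sym cub cl x'F sF _ _ _ xs xF sF _ _).
    - by rewrite eq_sym.
    - by rewrite Hall.
    - by rewrite Hall // eq_sym.
    - by rewrite sym.
    - by rewrite Hall // eq_sym.
  by rewrite E; apply/subsetP => z; rewrite !inE => /orP[/orP[]|]/eqP->.
have [a [c [d [X4 [aX cX dX] [ac ad cd] Uc Ud]]]] := diamond_struct dia.
have x'c : x' != c.
  apply/eqP => E; subst x'; apply: (no_ext cub X4 cX Uc xX); by rewrite sym.
have x'd : x' != d.
  apply/eqP => E; subst x'; apply: (no_ext cub X4 dX Ud xX); by rewrite sym.
exists c; split => // F cl cF xF [r1 [r2 [r12 r1F r2F /andP[xr1 xr2]]]].
have xc : x != c by apply: contraNneq xX => ->.
have x'F : x' \in F.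
  apply: (fill sym cub cl xF cF xc _ _ r12 r1F r2F xr1 xr2).
    by rewrite sym.
  by rewrite sym Uc // eq_sym.
have dF : d \in F.
  apply: (fill sym cub cl x'F cF x'c _ _ xc xF cF _ _).
  - by rewrite Ud // eq_sym.
  - by rewrite Ud // eq_sym.
  - by rewrite sym.
  - by rewrite sym Uc // eq_sym.
apply/subsetP => y yX.
case: (eqVneq y c) => [->//|yc]; case: (eqVneq y d) => [->//|yd].
apply: (fill sym cub cl cF dF cd _ _ _ x'F dF _ _).
- by rewrite sym Uc.
- by rewrite sym Ud.
- exact: x'd.
- by rewrite Uc // eq_sym.
- by rewrite Uc // eq_sym.
Qed.

Lemma root_unit (T : finType) (e : rel T) (X : {set T}) :
  symmetric e -> cubic e -> unitB e X ->
  exists S0 : {set T}, #|S0| <= 3 /\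
    forall F, closedF e F -> S0 \subset F -> X \subset F.
Proof.
move=> sym cub /orP[tri|dia].
  by exists X; split => //; case/andP: tri => /eqP ->.
have [a [c [d [X4 [aX cX dX] [ac ad cd] Uc Ud]]]] := diamond_struct dia.
exists [set a; c; d]; split.
  by rewrite -setUA cardsU1 cards2; case: (_ \notin _); case: (_ != _).
move=> F cl /subsetP S0F.
have aF : a \in F by apply: S0F; rewrite !inE eqxx.
have cF : c \in F by apply: S0F; rewrite !inE eqxx orbT.
have dF : d \in F by apply: S0F; rewrite !inE eqxx !orbT.
apply/subsetP => y yX.
case: (eqVneq y c) => [->//|yc]; case: (eqVneq y d) => [->//|yd].
apply: (fill sym cub cl cF dF cd _ _ _ aF dF _ _).
- by rewrite sym Uc.
- by rewrite sym Ud.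
- exact: ad.
- by rewrite Uc // eq_sym.
- by rewrite Uc // eq_sym.
Qed.

Lemma boundary (T : finType) (e : rel T) (A : {set T}) x p :
  path e x p -> x \in A -> last x p \notin A ->
  exists u v, [/\ u \in A, v \notin A & e u v].
Proof.
elim: p x => [|z p IH] x /=; first by move=> _ xA; rewrite xA.
case/andP=> exz pz xA lz.
case: (boolP (z \in A)) => zA; first exact: (IH z pz zA lz).
by exists x, z.
Qed.

Lemma grow (T : finType) (e : rel T) (P : {set {set T}}) k :
  symmetric e -> cubic e -> (forall x y, connect e x y) ->
  partition P [set: T] -> (forall B, B \in P -> unitB e B) ->
  0 < k <= #|P| -> exists (U : {set {set T}}) (S : {set T}), [/\ U \subset P, #|U| = k, #|S| <= k + 2 &
     forall F, closedF e F -> S \subset F -> cover U \subset F].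
Proof.
move=> sym cub conn /and3P[/eqP covP triv nz0] units.
have inblock B y : B \in P -> y \in B -> pblock P y = B.
  by move=> BP yB; apply: def_pblock.
elim: k => [//|k IH] /andP[_ kP].
case: k IH kP => [_|k IH] kP.
  have : 0 < #|P| by [].
  rewrite card_gt0 => /set0Pn[R RP].
  have [S0 [S0c HS0]] := root_unit sym cub (units R RP).
  exists [set R], S0; split => //.
  - by rewrite sub1set.
  - by rewrite cards1.
  - by move=> F cl S0F; rewrite /cover big_set1; apply: HS0.
have [U [S [UP Uk Sk HU]]] := IH (ltnW kP).
have : ~~ (P \subset U).
  by apply/negP => /subset_leq_card; rewrite Uk; clear - kP; lia.
case/subsetPn => B BP BU.
have : B != set0 by apply: contraNneq nz0 => <-.
case/set0Pn => y yB.
have yU : y \notin cover U.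
  apply/negP; rewrite /cover => /bigcupP[A AU yA].
  have AP : A \in P by apply: (subsetP UP).
  move: BU; by rewrite -(inblock _ _ BP yB) (inblock _ _ AP yA) AU.
have : U != set0 by rewrite -card_gt0 Uk.
case/set0Pn => A0 A0U.
have A0P : A0 \in P by apply: (subsetP UP).
have : A0 != set0 by apply: contraNneq nz0 => <-.
case/set0Pn => x0 x0A0.
have x0U : x0 \in cover U by rewrite /cover; apply/bigcupP; exists A0.
have /connectP [p pp ly] := conn x0 y.
have [x [x' [xU x'U xx']]] := boundary pp x0U ltac:(by rewrite -ly).
have x'cov : x' \in cover P by rewrite covP inE.
set B' := pblock P x'.
have B'P : B' \in P by apply: pblock_mem.
have x'B' : x' \in B' by rewrite mem_pblock.
move: xU; rewrite {1}/cover => /bigcupP[A AU xA].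
have AP : A \in P by apply: (subsetP UP).
have B'U : B' \notin U.
  apply/negP => B'U; move/negP: x'U; apply; rewrite /cover.
  by apply/bigcupP; exists B'.
have xB' : x \notin B'.
  apply/negP => xB'; move/negP: B'U; apply.
  by rewrite -(inblock _ _ B'P xB') (inblock _ _ AP xA).
have [s [sB' Hs]] := fill_unit sym cub (units _ B'P) x'B' xB' xx'.
exists (B' |: U), (s |: S); split.
- by rewrite subUset sub1set B'P UP.
- by rewrite cardsU1 B'U Uk.
- rewrite cardsU1; have := leq_b1 (s \notin S); clear - Sk; lia.
move=> F cl SF0.
have SF : {subset s |: S <= F} by apply/subsetP.
have HUF : cover U \subset F by apply: (HU F cl); apply/subsetP => z zS; apply: SF; rewrite !inE zS orbT.
have AF : A \subset F.
  apply: subset_trans HUF; rewrite /cover; exact: bigcup_sup.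
have B'F : B' \subset F.
  apply: (Hs F cl); first by apply: SF; rewrite !inE eqxx.
    by apply: (subsetP AF).
  have [r1 [r2 [r12 [r1A r2A] _ xr]]] := unit_nbrs sym (units _ AP) xA.
  by exists r1, r2; split => //; apply: (subsetP AF).
apply/subsetP => z; rewrite /cover => /bigcupP[C]; rewrite in_setU1.
case/orP => [/eqP->|CU] zC; first exact: (subsetP B'F).
apply: (subsetP HUF); rewrite /cover; apply/bigcupP; by exists C.
Qed.

Lemma sum_in (T : finType) (A S : {set T}) :
  \sum_(x in A) (x \in S : nat) = #|A :&: S|.
Proof.
rewrite -sum1_card big_mkcond /= [RHS]big_mkcond /=.
by apply: eq_bigr => x _; rewrite inE; case: (x \in A); case: (x \in S).
Qed.

Lemma card_sumB (T : finType) (P : {set {set T}}) (S : {set T}) :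
  partition P [set: T] -> #|S| = \sum_(B in P) #|B :&: S|.
Proof.
case/and3P=> /eqP covP triv _.
have := @big_trivIset T nat 0 addn P (fun x => (x \in S : nat)) triv.
rewrite covP sum_in setTI => ->.
by apply: eq_bigr => B _; rewrite sum_in.
Qed.

Lemma nbhd_out (T : finType) (e : rel T) (B : {set T}) w :
  symmetric e -> cubic e -> unitB e B -> w \in B -> #|nbhd e w :\: B| <= 1.
Proof.
move=> sym cub uB wB.
have [r1 [r2 [r12 [r1B r2B] _ /andP[w1 w2]]]] := unit_nbrs sym uB wB.
have : 2 <= #|nbhd e w :&: B|.
  have <- : #|[set r1; r2]| = 2 by rewrite cards2 r12.
  apply: subset_leq_card; apply/subsetP => z; rewrite !inE.
  by case/orP => /eqP->; rewrite ?w1 ?w2 ?r1B ?r2B.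
have := cardsID B (nbhd e w); rewrite cub; lia.
Qed.

Lemma meet (T : finType) (e : rel T) (B S : {set T}) :
  symmetric e -> cubic e -> unitB e B -> B != set0 ->
  spreading_set e 2 1 S -> exists v, v \in B :&: S.
Proof.
move=> sym cub uB Bn sp.
have [E0|NE] := eqVneq (B :&: S) set0; last by apply/set0Pn.
have H : forall w, w \notin B :&: S by move=> w; rewrite E0 inE.
have H0 : forall n w, w \in B -> w \notin iter n (spread_step e 2 1) S.
  elim=> [|n IH] w wB /=.
    by move: (H w); rewrite inE wB.
  rewrite {1}/spread_step in_setU (negbTE (IH w wB)) /= inE.
  apply/negP => /andP[/andP[_ H2] _].
  have : #|nbhd e w :&: iter n (spread_step e 2 1) S| <= #|nbhd e w :\: B|.
    apply: subset_leq_card; apply/subsetP => z; rewrite !inE.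
    case/andP=> -> zI; rewrite andbT.
    by apply/negP => zB; move: (IH z zB); rewrite zI.
  have := nbhd_out sym cub uB wB; lia.
case/set0Pn: Bn => w wB.
move/eqP: sp; rewrite /spread_closure => E.
by move: (H0 #|T| w wB); rewrite E inE.
Qed.

Lemma two_le (T : finType) (A : {set T}) x y :
  x != y -> x \in A -> y \in A -> 1 < #|A|.
Proof.
move=> xy xA yA.
have <- : #|[set x; y]| = 2 by rewrite cards2 xy.
by apply: subset_leq_card; apply/subsetP => z; rewrite !inE => /orP[]/eqP->.
Qed.

Lemma single_fixed (T : finType) (e : rel T) (P : {set {set T}}) (S : {set T}) :
  symmetric e -> partition P [set: T] -> (forall B, B \in P -> unitB e B) ->
  (forall B, B \in P -> #|B :&: S| <= 1) -> spread_closure e 2 1 S = S.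
Proof.
move=> sym /and3P[/eqP covP triv nz0] units one.
have st : spread_step e 2 1 S = S.
  apply/setP => w; rewrite {1}/spread_step in_setU.
  case wS: (w \in S) => //=.
  rewrite inE wS /=; apply/negP => /andP[_ /existsP[v /andP[vnS H1]]].
  move: vnS; rewrite inE => /andP[_ vS].
  have vcov : v \in cover P by rewrite covP inE.
  have BP := pblock_mem vcov.
  have vB : v \in pblock P v by rewrite mem_pblock.
  have [r1 [r2 [r12 [r1B r2B] [r1v r2v] /andP[v1 v2]]]] := unit_nbrs sym (units _ BP) vB.
  have nS r : r \in pblock P v -> r != v -> r \notin S.
    move=> rB rv; apply/negP => rS.
    have := one _ BP; rewrite leqNgt (@two_le _ _ r v) //; by rewrite inE ?rB ?vB ?rS ?vS.
  have := @two_le _ (nbhd e v :\: S) r1 r2 r12.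
  rewrite !inE v1 v2 (nS r1) // (nS r2) // => /(_ isT isT).
  by rewrite ltnNge H1.
rewrite /spread_closure; elim: #|T| => //= n ->; exact: st.
Qed.

Theorem theorem4p9 (T : finType) (e : rel T) (P : {set {set T}}) :
  simple_graph e -> connected_graph e -> cubic e -> claw_free e ->
  ~ is_K4 e -> unit_partition e P ->
  #|P| + 1 <= sigma_pq e 2 1 <= #|P| + 2.
Proof.
move=> [sym irr] [T0 conn] cub _ _ /andP[part /forallP unitsF].
have units : forall B, B \in P -> unitB e B.
  by move=> B BP; move: (unitsF B); rewrite BP.
have part' := part; case/and3P: part' => /eqP covP triv nz0.
have Bn : forall B, B \in P -> B != set0 by move=> B BP; apply: contraNneq nz0 => <-.
have [t _] := card_gt0P T0.
have tcov : t \in cover P by rewrite covP inE.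
have B0P := pblock_mem tcov.
have P0 : 0 < #|P| by rewrite card_gt0; apply/set0Pn; exists (pblock P t).
rewrite /sigma_pq; case: arg_minnP => [|Smin spS minS]; first exact: spreading_setT.
apply/andP; split.
  rewrite leqNgt; apply/negP => small.
  have ge1 : forall B, B \in P -> 0 < #|B :&: Smin|.
    move=> B BP; have [v vB] := meet sym cub (units _ BP) (Bn _ BP) spS.
    by rewrite card_gt0; apply/set0Pn; exists v.
  have Esum : #|Smin| = #|P| + \sum_(B in P) (#|B :&: Smin|).-1.
    rewrite (card_sumB Smin part) -sum1_card -big_split /=.
    by apply: eq_bigr => B BP; have := ge1 B BP; clear; lia.
  have : \sum_(B in P) (#|B :&: Smin|).-1 == 0.
    by move: small; rewrite Esum; clear; lia.
  rewrite sum_nat_eq0 => /forallP H0.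
  have one : forall B, B \in P -> #|B :&: Smin| <= 1.
    move=> B BP; move: (H0 B); rewrite BP /= => /eqP; clear; lia.
  have Ecl := single_fixed sym part units one.
  move/eqP: spS; rewrite Ecl => SmT.
  have vB : t \in pblock P t by rewrite mem_pblock.
  have [r1 [r2 [_ [r1B _] [r1v _] _]]] := unit_nbrs sym (units _ B0P) vB.
  have := one _ B0P; rewrite leqNgt (@two_le _ _ r1 t) //.
    by rewrite inE r1B SmT inE.
  by rewrite inE vB SmT inE.
have [U [S [UP Uk Sk HU]]] := grow sym cub conn part units (k := #|P|) ltac:(by rewrite P0 leqnn).
have UeqP : U = P by apply/eqP; rewrite eqEcard UP Uk leqnn.
have spS' : spreading_set e 2 1 S.
  apply/eqP/eqP; rewrite eqEcard subsetT cardsT /=.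
  have := HU _ (closure_closed e S) (closure_sub e S).
  rewrite UeqP covP => /subset_leq_card; by rewrite cardsT.
exact: leq_trans (minS _ spS') Sk.
Qed.
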